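(* Let $K$ be a field of characteristic zero and $x$ a free variable. Let $\delta$ be an arbitrary $K$-derivation or an arbitrary $K$-$\mathcal{E}$-derivation of $K[x]$. Then the image $\operatorname{Im}\delta=\delta(K[x])$ is a Mathieu subspace of $K[x]$.
   Context: A $K$-derivation of a commutative $K$-algebra $\mathcal{A}$ is a $K$-linear map $D:\mathcal{A}\to\mathcal{A}$ with $D(ab)=D(a)b+aD(b)$. A $K$-$\mathcal{E}$-derivation of $\mathcal{A}$ is a $K$-linear map $\delta:\mathcal{A}\to\mathcal{A}$ with $\delta(ab)=\delta(a)b+a\delta(b)-\delta(a)\delta(b)$ for all $a,b$; equivalently $\delta=\mathrm{id}-\phi$ for some $K$-algebra endomorphism $\phi$ of $\mathcal{A}$. A $K$-subspace $V$ of a commutative $K$-algebra $\mathcal{A}$ is a Mathieu subspace (Mathieu–Zhao space) if for all $a,b\in\mathcal{A}$ with $a^m\in V$ for all $m\ge 1$, one has $a^mb\in V$ for all $m\gg 0$. *)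

(* Defs.v *)
From HB Require Import structures.
From mathcomp Require Import all_boot all_order all_algebra.
Set Implicit Arguments. Unset Strict Implicit. Unset Printing Implicit Defensive.
Import GRing.Theory.
Local Open Scope ring_scope.

Definition poly_Klinear (K : fieldType) (f : {poly K} -> {poly K}) : Prop :=
  forall (c : K) (a b : {poly K}), f (c *: a + b) = c *: f a + f b.

Definition is_Kderivation (K : fieldType) (D : {poly K} -> {poly K}) : Prop :=
  poly_Klinear D /\ forall a b : {poly K}, D (a * b) = D a * b + a * D b.

Definition is_KEderivation (K : fieldType) (d : {poly K} -> {poly K}) : Prop :=
  poly_Klinear d /\
  forall a b : {poly K}, d (a * b) = d a * b + a * d b - d a * d b.

Definition is_Ksubspace (K : fieldType) (V : {poly K} -> Prop) : Prop :=
  V 0 /\ forall (c : K) (a b : {poly K}), V a -> V b -> V (c *: a + b).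

Definition is_Mathieu_subspace (K : fieldType) (V : {poly K} -> Prop) : Prop :=
  is_Ksubspace V /\
  forall a b : {poly K}, (forall m : nat, (1 <= m)%N -> V (a ^+ m)) ->
    exists N : nat, forall m : nat, (N <= m)%N -> V (a ^+ m * b).

Definition image_of (K : fieldType) (f : {poly K} -> {poly K}) : {poly K} -> Prop :=
  fun p => exists q, f q = p.

(* Main.v *)
Require Import Defs.
From mathcomp Require Import all_boot all_order all_algebra.
Local Open Scope ring_scope.
From mathcomp Require Import ring zify.
From Stdlib Require Import Classical.
Import GRing.Theory.

Section Newton.
Variable R : comNzRingType.

Definition Tb (b : R) (F : {poly R}) : {poly R} :=
  \sum_(t < size F) \sum_(i < t) (F`_t * b ^+ i)%:P * 'X^(t.-1 - i).

Lemma Tb_spec b F : ('X - b%:P) * Tb b F = F - (F.[b])%:P.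
Proof.
transitivity (\sum_(t < size F) F`_t *: 'X^t - (F.[b])%:P); last first.
  by rewrite -poly_def coefK.
rewrite /Tb horner_coef rmorph_sum -sumrB mulr_sumr.
apply: eq_bigr => t _.
have -> : F`_t *: 'X^t - (F`_t * b ^+ t)%:P = (F`_t)%:P * ('X ^+ t - b%:P ^+ t).
  by rewrite mulrBr mul_polyC polyCM rmorphXn.
rewrite subrXX mulrCA; congr (_ * _).
rewrite mulr_sumr; apply: eq_bigr => i _.
by rewrite polyCM rmorphXn; ring.
Qed.

Lemma XsubC_inj (b : R) (u v : {poly R}) : ('X - b%:P) * u = ('X - b%:P) * v -> u = v.
Proof.
have H : GRing.lreg (lead_coef ('X - b%:P)).
  rewrite (monicP (monicXsubC b)); exact: lreg1.
exact: (lreg_lead H).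
Qed.

Lemma Tb_cons (b x : R) (G : {poly R}) :
  Tb b (('X - x%:P) * G) = ('X - x%:P) * Tb b G + (G.[b])%:P.
Proof.
apply: (@XsubC_inj b); rewrite Tb_spec hornerM_comm; last exact: mulrC.
rewrite mulrDr mulrCA Tb_spec hornerXsubC.
rewrite polyCM polyCB; ring.
Qed.

Definition Qr (r : seq R) := \prod_(b <- r) ('X - b%:P).

Lemma Qr_root (r : seq R) (b : R) : b \in r -> (Qr r).[b] = 0.
Proof.
move=> br; rewrite /Qr horner_prod (big_rem b br) /= hornerXsubC subrr.
by rewrite mul0r.
Qed.

Lemma sumTb (r : seq R) : \sum_(b <- r) Tb b (Qr r) = (Qr r)^`().
Proof.
elim: r => [|x r IH]; first by rewrite big_nil /Qr big_nil derivC.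
rewrite big_cons /Qr big_cons -/(Qr r).
have -> : Tb x (('X - x%:P) * Qr r) = Qr r.
  apply: (@XsubC_inj x); rewrite Tb_spec hornerM_comm; last exact: mulrC.
  by rewrite hornerXsubC subrr mul0r subr0.
rewrite big_seq (eq_bigr (fun b => ('X - x%:P) * Tb b (Qr r))); last first.
  by move=> b br; rewrite Tb_cons Qr_root // addr0.
by rewrite -big_seq -mulr_sumr IH derivM derivXsubC mul1r.
Qed.

Lemma sum_bTb (r : seq R) (F : {poly R}) :
  (forall m, (0 < m <= (size F).-1)%N -> \sum_(b <- r) b ^+ m = 0) ->
  \sum_(b <- r) b%:P * Tb b F = 0.
Proof.
move=> Hp.
rewrite /Tb (eq_bigr (fun b => \sum_(t < size F) \sum_(i < t)
   (b * (F`_t * b ^+ i))%:P * 'X^(t.-1 - i))); last first.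
  move=> b _; rewrite mulr_sumr; apply: eq_bigr => t _.
  rewrite mulr_sumr; apply: eq_bigr => i _; by rewrite !polyCM !mulrA.
rewrite exchange_big /=; apply: big1 => t _.
rewrite exchange_big /=; apply: big1 => i _.
rewrite -mulr_suml -rmorph_sum.
have -> : \sum_(b <- r) b * (F`_t * b ^+ i) = F`_t * \sum_(b <- r) b ^+ i.+1.
  rewrite mulr_sumr; apply: eq_bigr => b _; rewrite exprS; ring.
rewrite Hp ?mulr0 ?mul0r //.
have ts := ltn_ord t; have it := ltn_ord i.
apply/andP; split => //; rewrite -ltnS (ltn_predK ts); exact: leq_ltn_trans it ts.
Qed.

Lemma newton_nil (r : seq R) :
  (forall m, (0 < m <= size r)%N -> \sum_(b <- r) b ^+ m = 0) ->
  (forall k, (0 < k <= size r)%N -> forall x : R, k%:R * x = 0 -> x = 0) ->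
  forall b, b \in r -> b ^+ size r = 0.
Proof.
move=> Hp Hk.
set n := size r.
have sQ : size (Qr r) = n.+1 by rewrite /Qr size_prod_XsubC.
have mQ : Qr r \is monic by exact: monic_prod_XsubC.
have key : 'X * (Qr r)^`() = Qr r *+ n.
  rewrite -sumTb mulr_sumr.
  rewrite big_seq (eq_bigr (fun b => Qr r + b%:P * Tb b (Qr r))); last first.
    move=> b br.
    have := Tb_spec b (Qr r); rewrite Qr_root // subr0 => E.
    by rewrite -{2}E; ring.
  rewrite -big_seq big_split /= sum_bTb ?addr0; last by rewrite sQ.
  have sc : forall (s : seq R) (x : {poly R}), \sum_(b <- s) x = x *+ size s.
    by move=> s x; elim: s => [|? s IH]; rewrite ?big_nil ?big_cons ?IH ?mulrS.
  by rewrite sc.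
have cQ : forall l, (l < n)%N -> (Qr r)`_l = 0.
  move=> l ln.
  have := congr1 (fun p : {poly R} => p`_l) key => /=.
  rewrite coefXM coefMn.
  have E : forall y : R, y *+ l = y *+ n -> y = 0.
    move=> y Ey; apply: (Hk (n - l)%N).
      by apply/andP; split; rewrite ?subn_gt0 ?leq_subr.
    by rewrite mulr_natl mulrnBr ?Ey ?subrr // ltnW.
  case: l ln E => [|l] ln E /=.
    by move=> H; apply: E; rewrite mulr0n -H.
  rewrite coef_deriv => H; exact: E.
have QX : Qr r = 'X^n.
  apply/polyP => l; rewrite coefXn.
  case: (ltngtP l n) => [ln|nl|->].
  - by rewrite cQ.
  - by rewrite nth_default // sQ.
  - by have := monicP mQ; rewrite /lead_coef sQ.
move=> b br; have := @Qr_root r b br; by rewrite QX hornerXn.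
Qed.

End Newton.
Lemma exn d : exists n, (0 < n)%N /\ (d * n < 2 ^ n)%N.
Proof.
exists (d.+1 * 4)%N; split => //.
have := ltn_expl d.+1 (isT : (1 < 2)%N).
rewrite expnM.
move: (2 ^ d.+1)%N => X H.
have H2 : (d.+2 ^ 4 <= X ^ 4)%N by rewrite leq_exp2r.
apply: (leq_trans _ H2). nia.
Qed.

Section Main.
Variable K : fieldType.
Definition Vh (h : {poly K}) (v : {poly K}) : Prop := exists q, q - (q \Po h) = v.
Definition MCond (V : {poly K} -> Prop) := forall a b : {poly K},
  (forall m, (1 <= m)%N -> V (a ^+ m)) -> exists N : nat, forall m, (N <= m)%N -> V (a ^+ m * b).

Lemma comp_polyXn_l (p q : {poly K}) m : (p ^+ m) \Po q = (p \Po q) ^+ m.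
Proof.
elim: m => [|m IH]; first by rewrite !expr0 -polyC1 comp_polyC.
by rewrite !exprS comp_polyM IH.
Qed.

Lemma Vh0 (h : {poly K}) : Vh h 0.
Proof. by exists 0; rewrite comp_poly0 subrr. Qed.

Lemma mc_zero (h : {poly K}) : (forall a : {poly K}, (forall m, (1 <= m)%N -> Vh h (a ^+ m)) -> a = 0) -> MCond (Vh h).
Proof.
move=> H a b Ha; exists 1%N => m m1; rewrite (H a Ha) expr0n.
have -> : (m == 0%N) = false by case: m m1.
by rewrite mul0r; apply: Vh0.
Qed.

Lemma mc_const (h : {poly K}) : (size h <= 1)%N -> MCond (Vh h).
Proof.
move=> sh; set c := h`_0; have hc : h = c%:P by exact: size1_polyC.
have memV : forall v, Vh h v <-> v.[c] = 0.
  move=> v; split.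
    by case=> q <-; rewrite hc comp_polyCr hornerD hornerN hornerC subrr.
  by move=> vc; exists v; rewrite hc comp_polyCr vc subr0.
move=> a b Ha; exists 1%N => m m1; apply/memV.
have : a.[c] = 0 by apply/memV; have := Ha 1%N isT; rewrite expr1.
by move=> ac; rewrite hornerM horner_exp ac expr0n; case: m m1 => // m _; rewrite mul0r.
Qed.

Lemma mc_id : MCond (Vh 'X).
Proof.
apply: mc_zero => a Ha; have [q Eq] := Ha 1%N isT.
by rewrite expr1 in Eq; rewrite -Eq comp_polyXr subrr.
Qed.

Lemma coef_comp_scaleX (p : {poly K}) (c : K) k : (p \Po (c *: 'X))`_k = c ^+ k * p`_k.
Proof.
elim/poly_ind: p k => [|p d IH] k; first by rewrite comp_poly0 !coef0 mulr0.
rewrite comp_polyD comp_polyM comp_polyX comp_polyC -scalerAr !coefD coefZ !coefMX !coefC IH.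
by case: k => [|k] /=; rewrite ?mulr0 ?add0r ?expr0 ?mul1r ?addr0 // exprS mulrA.
Qed.

Lemma mc_lin (lam mu : K) : lam != 1 -> MCond (Vh (lam *: 'X + mu%:P)).
Proof.
move=> l1; set h := lam *: 'X + mu%:P.
set x0 := mu / (1 - lam).
have l1' : 1 - lam != 0 by rewrite subr_eq0 eq_sym.
set s := 'X + x0%:P; set si := 'X - x0%:P.
have ssi : forall p, p \Po s \Po si = p.
  move=> p; rewrite -comp_polyA /s comp_polyD comp_polyX comp_polyC /si.
  by rewrite subrK comp_polyXr.
have sis : forall p, p \Po si \Po s = p.
  move=> p; rewrite -comp_polyA /s comp_polyB comp_polyX comp_polyC /si.
  by rewrite addrK comp_polyXr.
have conj : forall q, (q \Po h) \Po s = (q \Po s) \Po (lam *: 'X).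
  move=> q; rewrite -!comp_polyA; congr (q \Po _).
  rewrite /h /s comp_polyD comp_polyZ comp_polyX comp_polyC comp_polyD comp_polyX comp_polyC.
  rewrite scalerDr -addrA; congr (_ + _).
  rewrite -mul_polyC -polyCM -polyCD; congr (_%:P).
  rewrite /x0; field; exact: l1'.
pose W v := forall k, lam ^+ k = 1 -> (v \Po s)`_k = 0.
have VW : forall v, Vh h v <-> W v.
  move=> v; split.
    case=> q <- k lk; rewrite comp_polyB conj coefB coef_comp_scaleX lk mul1r.
    by rewrite subrr.
  move=> Wv; set vt := v \Po s.
  pose qt := \poly_(k < size vt) (vt`_k / (1 - lam ^+ k)).
  exists (qt \Po si).
  rewrite -[v]ssi -/vt -[LHS]ssi; congr (_ \Po si).
  rewrite comp_polyB conj sis; apply/polyP => k.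
  rewrite coefB coef_comp_scaleX coef_poly.
  case: (ltnP k (size vt)) => kv; last by rewrite mulr0 subrr nth_default.
  have [lk|lk] := eqVneq (lam ^+ k) 1.
    by rewrite lk subrr invr0 !mulr0 subr0 [RHS]Wv.
  have lk' : 1 - lam ^+ k != 0 by rewrite subr_eq0 eq_sym.
  by field.
have Wa : forall a, (forall m, (1 <= m)%N -> Vh h (a ^+ m)) ->
   forall m, (1 <= m)%N -> forall k, lam ^+ k = 1 -> ((a \Po s) ^+ m)`_k = 0.
  by move=> a Ha m m1 k lk; rewrite -comp_polyXn_l; apply: (proj1 (VW _) (Ha m m1)).
case: (classic (exists k, (0 < k)%N /\ lam ^+ k = 1)) => [[k [k0 lk]]|nr].
  apply: mc_zero => a Ha.
  have Wk := Wa a Ha k k0.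
  suff at0 : a \Po s = 0 by rewrite -[a]ssi at0 comp_poly0.
  apply/eqP; rewrite -lead_coef_eq0; apply/eqP.
  have : lead_coef ((a \Po s) ^+ k) = 0.
    by rewrite /lead_coef size_exp Wk // mulnC exprM lk expr1n.
  by rewrite lead_coef_exp => /eqP; rewrite expf_eq0 => /andP [_ /eqP].
move=> a b Ha; exists 1%N => m m1; apply/VW => k lk.
have k0 : k = 0%N.
  case: k lk => // k lk; exfalso; apply: nr; by exists k.+1.
rewrite k0 comp_polyM coef0M comp_polyXn_l (Wa a Ha m m1 0%N) ?expr0 //.
by rewrite mul0r.
Qed.
Lemma transl_surj (chr : forall n, (n%:R == 0 :> K) = (n == 0%N)) (mu : K) :
  mu != 0 -> forall w, Vh ('X + mu%:P) w.
Proof.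
move=> mu0; set t := 'X + mu%:P.
have tm : t \is monic by rewrite /t -[mu]opprK polyCN monicXsubC.
suff H : forall n (w : {poly K}), (size w <= n)%N -> Vh t w by move=> w; exact: (H _ w (leqnn _)).
elim=> [|n IH] w sw.
  by move: sw; rewrite size_poly_leq0 => /eqP ->; exists 0; rewrite comp_poly0 subrr.
set c := w`_n.
set S := \sum_(i < n.+1) 'X^(n - i) * t ^+ i.
have termP : forall i : 'I_n.+1, size ('X^(n - i) * t ^+ i) = n.+1 /\
     ('X^(n - i) * t ^+ i) \is monic.
  move=> i; have ti := monic_exp i tm.
  split; last by rewrite monicMl ?monicXn.
  rewrite size_Mmonic ?monic_neq0 ?monicXn // (@size_polyXn K).
  have := size_exp_XsubC i (- mu); rewrite polyCN opprK -/t => ->.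
  have := ltn_ord i; lia.
have Sn : S`_n = (n.+1)%:R.
  rewrite coef_sum (eq_bigr (fun _ => 1)); first by rewrite sumr_const card_ord.
  move=> i _; have [s1 m1] := termP i.
  by have := monicP m1; rewrite /lead_coef s1.
have Sj : forall j, (n < j)%N -> S`_j = 0.
  move=> j nj; rewrite coef_sum big1 // => i _; have [s1 _] := termP i.
  by rewrite nth_default // s1.
have n1 : (n.+1)%:R != 0 :> K by rewrite chr.
set k := - c / (mu * (n.+1)%:R).
set p0 := k *: 'X^(n.+1).
have Ep0 : p0 - (p0 \Po t) = k *: (- mu%:P * S).
  rewrite /p0 comp_polyZ comp_Xn_poly -scalerBr subrXX /S.
  congr (_ *: (_ * _)); rewrite /t; ring.
set w' := w - (p0 - (p0 \Po t)).
have sw' : (size w' <= n)%N.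
  apply/leq_sizeP => j nj; rewrite /w' Ep0 coefB coefZ mulNr coefN coefCM.
  case: (ltngtP n j) => [nj'|jn|<-]; last 2 first.
  - by move: jn; rewrite ltnNge nj.
  - rewrite Sn /k /c; field; by rewrite mu0 addrC natr1 n1.
  - by rewrite Sj // (leq_sizeP _ _ sw) // mulr0 oppr0 mulr0 subr0.
have [q' Eq'] := IH w' sw'.
exists (p0 + q'); rewrite comp_polyD.
have -> : p0 + q' - (p0 \Po t + (q' \Po t)) = (p0 - (p0 \Po t)) + (q' - (q' \Po t)) by ring.
by rewrite Eq' /w' addrC subrK.
Qed.
Lemma dvd_comp (q H : {poly K}) : (H - 'X) %| ((q \Po H) - q).
Proof.
elim/poly_ind: q => [|p c IH]; first by rewrite comp_poly0 subrr dvdp0.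
rewrite comp_polyD comp_polyM comp_polyX comp_polyC.
have -> : (p \Po H) * H + c%:P - (p * 'X + c%:P) = ((p \Po H) - p) * H + p * (H - 'X) by ring.
by apply: dvdp_add; [exact: dvdp_mulr | exact: dvdp_mull (dvdpp _)].
Qed.

Lemma qpoly_zero (M p : {poly K}) : M \is monic -> (1 < size M)%N ->
  (in_qpoly M p = 0 <-> M %| p).
Proof.
move=> mM sM.
have mk : mk_monic M = M by rewrite /mk_monic sM mM.
have vE : (in_qpoly M p : {poly K}) = Pdiv.Ring.rmodp p (mk_monic M) by [].
split.
  move=> H; have E : Pdiv.Ring.rmodp p (mk_monic M) = 0 by rewrite -vE H.
  by rewrite dvdpE; apply/Pdiv.Ring.rmodp_eq0P; rewrite -mk.
move=> H; apply: val_inj => /=; rewrite mk.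
by apply/Pdiv.Ring.rmodp_eq0P; rewrite -dvdpE.
Qed.

Lemma mc_big_zero (chr : forall n, (n%:R == 0 :> K) = (n == 0%N)) (h : {poly K}) :
  (2 < size h)%N -> forall a, (forall m, (1 <= m)%N -> Vh h (a ^+ m)) -> a = 0.
Proof.
move=> sh a Ha.
pose Hn n := iter n (fun p => p \Po h) 'X.
have HnS : forall n, Hn n.+1 = Hn n \Po h by [].
have Hcomm : forall n, h \Po Hn n = Hn n \Po h.
  elim=> [|n IH]; first by rewrite /= comp_polyXr comp_polyX.
  by rewrite HnS comp_polyA IH.
set e := (size h).-1.
have e2 : (2 <= e)%N by rewrite /e; case: (size h) sh => // [[|[|s]]].
have sHn : forall n, (size (Hn n)).-1 = (e ^ n)%N.
  elim=> [|n IH]; first by rewrite /= size_polyX.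
  by rewrite HnS size_comp_poly IH expnS mulnC.
have tele : forall q n, \sum_(i < n) ((q - (q \Po h)) \Po Hn i) = q - (q \Po Hn n).
  move=> q; elim=> [|n IH]; first by rewrite big_ord0 /= comp_polyXr subrr.
  rewrite big_ord_recr /= IH comp_polyB -comp_polyA Hcomm -HnS.
  by rewrite addrA subrK.
have [ao|an0] := eqVneq a 0; first by [].
exfalso.
set d := (size a).-1.
have [n [n0 dn]] := exn d.
set g := Hn n - 'X.
have sHn2 : (2 < size (Hn n))%N.
  have := sHn n; have : (2 ^ n <= e ^ n)%N by rewrite leq_exp2r.
  have : (2 <= 2 ^ n)%N by rewrite -{1}(expn1 2) leq_exp2l.
  case: (size (Hn n)) => // s; lia.
have sg : size g = size (Hn n).
  by rewrite /g size_addl // size_opp size_polyX.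
have g0 : g != 0 by rewrite -size_poly_gt0 sg; lia.
have lg0 : lead_coef g != 0 by rewrite lead_coef_eq0.
set M := (lead_coef g)^-1 *: g.
have mM : M \is monic by rewrite monicE lead_coefZ mulVf.
have sM : size M = size g by rewrite size_scale // invr_eq0.
have sM1 : (1 < size M)%N by rewrite sM sg; lia.
have dM : forall p, (M %| p) = (g %| p) by move=> p; rewrite dvdpZl // invr_eq0.
pose rho := in_qpoly M.
pose r := [seq rho (a \Po Hn i) | i <- iota 0 n].
have sr : size r = n by rewrite size_map size_iota.
have nil := @newton_nil _ r.
have Hpow : forall m, (0 < m <= size r)%N -> \sum_(b <- r) b ^+ m = 0.
  move=> m /andP [m1 _].
  rewrite big_map (eq_bigr (fun i => rho ((a ^+ m) \Po Hn i))); last first.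
    by move=> i _; rewrite comp_polyXn_l /rho rmorphXn.
  rewrite /rho -rmorph_sum.
  apply/qpoly_zero => //; rewrite dM.
  have -> : \sum_(i <- iota 0 n) (a ^+ m \Po Hn i) = \sum_(i < n) (a ^+ m \Po Hn i).
    by rewrite -(big_mkord xpredT (fun i => a ^+ m \Po Hn i)) /index_iota subn0.
  have [q Eq] := Ha m m1; rewrite -Eq tele.
  by rewrite -dvdpNr opprB dvd_comp.
have Hlreg : forall k, (0 < k <= size r)%N -> forall x : {poly %/ M}, k%:R * x = 0 -> x = 0.
  move=> k /andP [k0 _] x; rewrite mulr_natl -scaler_nat => E.
  have k0' : (k%:R : K) != 0 by rewrite chr -lt0n.
  by rewrite -[x]scale1r -(mulVf k0') -scalerA E scaler0.
have ra : rho a \in r.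
  apply/mapP; exists 0%N; first by rewrite mem_iota add0n.
  by rewrite /= comp_polyXr.
have := nil Hpow Hlreg _ ra; rewrite sr -rmorphXn => /qpoly_zero => /(_ mM sM1).
rewrite dM => /dvdp_leq.
have an : a ^+ n != 0 by rewrite expf_neq0.
move=> /(_ an).
have : (size (a ^+ n)).-1 = (d * n)%N by rewrite size_exp.
have : (2 ^ n <= e ^ n)%N by rewrite leq_exp2r.
rewrite sg; have := sHn n.
have : (0 < size (a ^+ n))%N by rewrite size_poly_gt0.
move: (size (a ^+ n)) (size (Hn n)) => A B; lia.
Qed.

Lemma mc_comp (chr : forall n, (n%:R == 0 :> K) = (n == 0%N)) (h : {poly K}) :
  MCond (Vh h).
Proof.
case: (leqP (size h) 1) => [sh|sh1]; first exact: mc_const.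
case: (leqP (size h) 2) => [sh2|sh2]; last first.
  by apply: mc_zero => a; apply: mc_big_zero.
have hE : h = h`_1 *: 'X + (h`_0)%:P.
  apply/polyP => i; rewrite coefD coefZ coefX coefC.
  case: i => [|[|i]] /=; rewrite ?mulr0 ?add0r ?addr0 ?mulr1 //.
  by rewrite nth_default //; apply: leq_trans sh2 _.
rewrite hE; have [l1|l1] := eqVneq h`_1 1; last exact: mc_lin.
rewrite l1 scale1r; have [m0|m0] := eqVneq h`_0 0.
  by rewrite m0 addr0; exact: mc_id.
by move=> a b _; exists 0%N => m _; apply: transl_surj.
Qed.

End Main.
Arguments Vh {K}.

Theorem theorem1p5 (K : fieldType) (charK0 : [pchar K] =i pred0)
  (delta : {poly K} -> {poly K}) :
  is_Kderivation delta \/ is_KEderivation delta ->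
  is_Mathieu_subspace (image_of delta).
Proof.
have chr : forall n, (n%:R == 0 :> K) = (n == 0%N) by apply/pcharf0P.
move=> Hd.
have lin : poly_Klinear delta by case: Hd => [[]|[]].
have f0 : delta 0 = 0.
  have E := lin 1 0 0; rewrite !scale1r addr0 in E.
  by apply: (addrI (delta 0)); rewrite addr0 -E.
have fD : forall u v, delta (u + v) = delta u + delta v.
  by move=> u v; have := lin 1 u v; rewrite !scale1r.
have fZ : forall c u, delta (c *: u) = c *: delta u.
  by move=> c u; have := lin c u 0; rewrite !addr0 f0 addr0.
split.
  split; first by exists 0.
  by move=> c u v [qu <-] [qv <-]; exists (c *: qu + qv); rewrite lin.
case: Hd => [[_ Hl]|[_ Hm]].
  have D1 : delta 1 = 0.
    have E : delta 1 = delta 1 + delta 1 by rewrite -{1}(mulr1 1) Hl mulr1 mul1r.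
    by apply: (addrI (delta 1)); rewrite addr0 -E.
  have DC : forall c, delta c%:P = 0.
    by move=> c; rewrite -alg_polyC -[c *: 1]addr0 lin D1 scaler0 f0 addr0.
  have Dform : forall p, delta p = p^`() * delta 'X.
    elim/poly_ind => [|p c IH]; first by rewrite f0 deriv0 mul0r.
    rewrite fD Hl DC IH derivD derivM derivX derivC; ring.
  have anti : forall g : {poly K}, exists P : {poly K}, P^`() = g.
    move=> g; exists (\poly_(i < (size g).+1) (if i is j.+1 then g`_j / (j.+1)%:R else 0)).
    apply/polyP => i; rewrite coef_deriv coef_poly.
    case: (ltnP i (size g)) => ig.
      by rewrite ltnS ig -(mulr_natr (g`_i / (i.+1)%:R) i.+1) divfK // chr.
    by rewrite ltnS ltnNge ig /= mul0rn nth_default.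
  move=> a b Ha; exists 1%N => m m1.
  have [q Eq] := Ha 1%N isT; rewrite expr1 Dform in Eq.
  have [P EP] := anti (q^`() * (a ^+ m.-1 * b)).
  have -> : a ^+ m = a * a ^+ m.-1 by rewrite -exprS prednK.
  exists P; rewrite Dform EP -Eq; ring.
pose phi p := p - delta p.
have phiM : forall u v, phi (u * v) = phi u * phi v.
  by move=> u v; rewrite /phi Hm; ring.
have phiD : forall u v, phi (u + v) = phi u + phi v.
  by move=> u v; rewrite /phi fD; ring.
have phiZ : forall c u, phi (c *: u) = c *: phi u.
  by move=> c u; rewrite /phi fZ scalerBr.
have e1 : phi 1 * (phi 1 - 1) = 0.
  by rewrite mulrBr mulr1 -phiM mul1r subrr.
have e1' : phi 1 = 0 \/ phi 1 = 1.
  move: e1 => /eqP; rewrite mulf_eq0 => /orP [/eqP ->|]; first by left.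
  by rewrite subr_eq0 => /eqP ->; right.
case: e1' => [p0|p1].
  have did : forall u, delta u = u.
    move=> u; have : phi u = 0 by rewrite -[u]mulr1 phiM p0 mulr0.
    by rewrite /phi => /eqP; rewrite subr_eq0 => /eqP <-.
  by move=> a b _; exists 0%N => m _; exists (a ^+ m * b); rewrite did.
set h := phi 'X.
have phiC : forall p, phi p = p \Po h.
  elim/poly_ind => [|p c IH]; first by rewrite /phi f0 subrr comp_poly0.
  rewrite phiD phiM IH comp_polyD comp_polyM comp_polyX comp_polyC.
  by rewrite -alg_polyC phiZ p1.
have dE : forall p, delta p = p - (p \Po h).
  by move=> p; rewrite -phiC /phi opprB addrC subrK.
have VE : forall v, image_of delta v <-> Vh h v.
  move=> v; split; case=> q <-; exists q => //; by rewrite dE.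
move=> a b Ha.
have [N HN] := @mc_comp K chr h a b (fun m m1 => proj1 (VE _) (Ha m m1)).
by exists N => m mN; apply/VE; apply: HN.
Qed.
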